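(* There is an absolute constant $c>0$ such that every connected finite simple undirected graph on $d\ge2$ vertices in which every vertex has degree $1$ or degree at least $3$ has a spanning tree with at least $c\,d$ leaves.
   Context: A leaf of a tree is a vertex of degree 1. *)

(* Defs.v *)
From mathcomp Require Import all_boot all_order all_algebra.
Set Implicit Arguments. Unset Strict Implicit. Unset Printing Implicit Defensive.
Import Order.TTheory GRing.Theory Num.Theory.

Definition simple_graph (T : finType) (e : rel T) : Prop :=
  symmetric e /\ irreflexive e.

Definition degree (T : finType) (e : rel T) (x : T) : nat := #|[set y | e x y]|.

Definition connected_graph (T : finType) (e : rel T) : Prop :=
  forall x y : T, connect e x y.

(* a cycle: a closed walk x, s_1, ..., s_k, x with k >= 2 (at least 3
   vertices) all of whose vertices are distinct *)
Definition has_cycle (T : finType) (e : rel T) : Prop :=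
  exists (x : T) (s : seq T),
    [/\ 2 <= size s, uniq (x :: s), path e x s & e (last x s) x].

Definition acyclic (T : finType) (e : rel T) : Prop := ~ has_cycle e.

Definition spanning_tree (T : finType) (e t : rel T) : Prop :=
  [/\ subrel t e, simple_graph t, connected_graph t & acyclic t].

Definition leaves (T : finType) (e : rel T) : {set T} :=
  [set x | degree e x == 1%N].

(* Main.v *)
Require Import Defs.
From mathcomp Require Import all_boot all_order all_algebra.
From mathcomp Require Import zify lra.
Import Order.TTheory GRing.Theory Num.Theory.

Section Tree.
Variables (T : finType) (e : rel T) (r : T).
Hypothesis esym : symmetric e.
Hypothesis eirr : irreflexive e.

Local Notation Nb x := ([set z | e x z]).

Definition BI (A P : {set T}) (p : T -> T) (h : T -> nat) : Prop :=
  [/\ r \in A, P \subset A, p r = r,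
      (forall y, y \in A -> y != r -> [/\ p y \in P, e y (p y) & h (p y) < h y])
    & (forall x, x \in P -> Nb x \subset A)].

Definition Dead (A P : {set T}) : {set T} := [set x in A :\: P | Nb x \subset A].

Definition pot (A P : {set T}) := 3 * #|P| + 1 <= 2 * #|A| + #|Dead A P|.

Definition Sx (A : {set T}) a := Nb a :\: A.
Definition exA (A : {set T}) a := A :|: Sx A a.
Definition exP (P : {set T}) (a : T) := a |: P.
Definition exp (A : {set T}) a (p : T -> T) := fun z => if z \in Sx A a then a else p z.
Definition exh (A : {set T}) a (h : T -> nat) := fun z => if z \in Sx A a then (h a).+1 else h z.

Lemma nS (A : {set T}) a z : z \in A -> z \notin Sx A a.
Proof. by move=> zA; rewrite /Sx !inE zA. Qed.
Arguments nS {A} a {z}.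

Lemma expand_BI (A P : {set T}) p h a : BI A P p h -> a \in A ->
  BI (exA A a) (exP P a) (exp A a p) (exh A a h).
Proof.
case=> rA PA pr Hy HP aA.
split.
- by rewrite /exA !inE rA.
- apply/subsetP=> z; rewrite /exP /exA !inE => /orP[/eqP->|zP]; first by rewrite aA.
  by rewrite (subsetP PA z zP).
- by rewrite /exp (negbTE (nS a rA)).
- move=> y; rewrite /exA inE => /orP[yA|yS] ynr.
  + rewrite /exp /exh (negbTE (nS a yA)).
    have [pP eyp hl] := Hy y yA ynr.
    rewrite (negbTE (nS a (subsetP PA _ pP))).
    by rewrite /exP !inE pP orbT.
  + rewrite /exp /exh yS (negbTE (nS a aA)) /exP !inE eqxx /= ltnSn; split=> //.
    by move: yS; rewrite /Sx !inE => /andP[_]; rewrite esym.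
- move=> x; rewrite /exP !inE => /orP[/eqP->|xP].
  + apply/subsetP=> z zN; rewrite /exA /Sx !inE.
    by case: (z \in A) => //=; rewrite inE in zN.
  + apply: subset_trans (HP x xP) _; apply/subsetP=> z; rewrite /exA !inE => ->.
    by [].
Qed.

Lemma card_exA (A : {set T}) a : #|exA A a| = #|A| + #|Sx A a|.
Proof.
rewrite /exA cardsU.
have -> : A :&: Sx A a = set0.
  by apply/setP=> z; rewrite /Sx !inE; case: (z \in A); rewrite ?andbF.
by rewrite cards0 subn0.
Qed.

Lemma card_exP (P : {set T}) a : a \notin P -> #|exP P a| = #|P|.+1.
Proof. by move=> aP; rewrite /exP cardsU1 aP. Qed.

Lemma dead_mono (A P : {set T}) a : a \in A -> (exists z, z \in Sx A a) ->
  Dead A P \subset Dead (exA A a) (exP P a).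
Proof.
move=> aA [z zS]; apply/subsetP=> x; rewrite /Dead !inE => /andP[/andP[xP xA] sub].
have xa : x != a.
  apply/eqP=> xa; subst x; move: zS; rewrite /Sx !inE => /andP[zA eaz].
  by move: (subsetP sub z); rewrite inE eaz (negbTE zA) => /(_ isT).
rewrite (negbTE xa) (negbTE xP) xA /=.
by apply: subset_trans sub _; apply/subsetP=> u; rewrite !inE => ->.
Qed.

Lemma edge_out (A : {set T}) u w : connect e u w -> u \in A -> w \notin A ->
  exists a b, [/\ a \in A, b \notin A & e a b].
Proof.
move/connectP=> [s]; elim: s u => [|z s IH] u /=.
- by move=> _ -> ->.
- move=> /andP[euz pz] lw uA wA. case zA: (z \in A).
  + exact: (IH z pz lw zA wA).
  + by exists u, z; rewrite zA.
Qed.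

Lemma le1_eq (B : {set T}) y z : #|B| <= 1 -> y \in B -> z \in B -> z = y.
Proof.
move=> hB yB zB; apply/eqP; apply: contraTT hB => ne.
rewrite -ltnNge.
have: #|[set y; z]| <= #|B|.
  by apply subset_leq_card; apply/subsetP=> u; rewrite !inE => /orP[]/eqP->.
by rewrite cards2 eq_sym ne.
Qed.

Lemma exists_other (B : {set T}) x : 1 < #|B| -> exists w, w \in B /\ w != x.
Proof.
move=> hB. case: (set_0Vmem (B :\ x)) => [H|[w]]; last first.
  by rewrite !inE => /andP[wx wB]; exists w.
have : B \subset [set x].
  apply/subsetP=> z zB; rewrite inE; apply/negPn/negP=> zx.
  have: z \in B :\ x by rewrite !inE zx zB.
  by rewrite H inE.
by move/subset_leq_card; rewrite cards1 => h1; rewrite ltnNge h1 in hB.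
Qed.

Arguments card_exP {P a}.
Arguments le1_eq {B y z}.
Arguments exists_other {B} x.
Hypothesis conn : forall x y, connect e x y.
Hypothesis deg : forall x : T, degree e x = 1%N \/ (3 <= degree e x)%N.

Lemma arA {P A D D' k} : 3*P+1 <= 2*A + D -> D <= D' -> 1 < k -> 3 * P.+1 + 1 <= 2 * (A + k) + D'.
Proof. lia. Qed.
Lemma arB {P A D D1 D2 k} : 3*P+1 <= 2*A + D -> D <= D1 -> D1 <= D2 -> 1 < k ->
  3 * (P.+1).+1 + 1 <= 2 * (A.+1 + k) + D2.
Proof. lia. Qed.
Lemma arC {P A D D1} : 3*P+1 <= 2*A + D -> D < D1 -> 3 * P.+1 + 1 <= 2 * A.+1 + D1.
Proof. lia. Qed.
Lemma arD {x a y w} : 3 <= x -> y <= 1 -> x <= a + y - w -> 1 < a.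
Proof. lia. Qed.
Lemma arS {A k} : 0 < k -> A < A + k.
Proof. lia. Qed.

Lemma nonempty_of (B : {set T}) : 0 < #|B| -> exists u, u \in B.
Proof.
by case: (set_0Vmem B) => [E|[u uS]]; [rewrite E cards0 | exists u].
Qed.

Lemma step (A P : {set T}) p h : BI A P p h -> r \in P -> pot A P -> A != setT ->
  exists A' P' p' h', [/\ BI A' P' p' h', r \in P', pot A' P' & #|A| < #|A'|].
Proof.
move=> bi rP po neA.
have BI0 := bi; case: bi => rA PA pr Hy HP.
have [z zA] : exists z, z \notin A.
  have : [exists z, z \notin A].
    apply: contraR neA => /existsPn H; apply/eqP/setP=> u.
    by rewrite inE; exact/negPn/H.
  by case/existsP=> u uA; exists u.
have [a [b [aA bA eab]]] := @edge_out A r z (conn r z) rA zA.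
have aP : a \notin P.
  apply/negP=> aP; move: (subsetP (HP a aP) b); rewrite inE eab => /(_ isT).
  by rewrite (negbTE bA).
have bS : b \in Sx A a by rewrite /Sx !inE bA eab.
case: (boolP [exists x, (x \in A :\: P) && (1 < #|Sx A x|)]).
- case/existsP=> x /andP[]; rewrite inE => /andP[xP xA] hS.
  exists (exA A x), (exP P x), (exp A x p), (exh A x h); split.
  + exact: expand_BI.
  + by rewrite /exP !inE rP orbT.
  + have [u uS] := @nonempty_of _ (ltnW hS).
    have := subset_leq_card (@dead_mono A P x xA (ex_intro _ u uS)).
    move: po; rewrite /pot card_exA (card_exP xP) => po' hD. exact: (arA po' hD hS).
  + by rewrite card_exA; apply: arS; apply: ltnW.
- move/existsPn=> Hn.
  have Hle : forall x, x \in A -> x \notin P -> #|Sx A x| <= 1.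
    by move=> x xA xP; move: (Hn x); rewrite !inE xA xP /= -leqNgt.
  have Sa1 : #|Sx A a| = 1.
    apply/eqP; rewrite eqn_leq Hle //= card_gt0; apply/set0Pn; by exists b.
  set A1 := exA A a; set P1 := exP P a.
  have bi1 := @expand_BI A P p h a BI0 aA.
  have cA1 : #|A1| = #|A|.+1 by rewrite /A1 card_exA Sa1 addn1.
  have cP1 : #|P1| = #|P|.+1 by rewrite /P1 card_exP.
  have d1 : Dead A P \subset Dead A1 P1 := @dead_mono A P a aA (ex_intro _ b bS).
  have bA1 : b \in A1 by rewrite /A1 /exA inE bS orbT.
  have aA1 : a \in A1 by rewrite /A1 /exA inE aA.
  have ba : b != a by apply/eqP=> E; rewrite E eirr in eab.
  have bP1 : b \notin P1.
    rewrite /P1 /exP !inE negb_or ba /=; apply/negP=> bP.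
    by rewrite (subsetP PA b bP) in bA.
  case: (ltnP 1 #|Sx A1 b|) => hS2.
  + exists (exA A1 b), (exP P1 b), (exp A1 b (exp A a p)), (exh A1 b (exh A a h)); split.
    * exact: expand_BI.
    * by rewrite /exP /P1 /exP !inE rP !orbT.
    * have [u uS] := @nonempty_of _ (ltnW hS2).
      have := subset_leq_card (@dead_mono A1 P1 b bA1 (ex_intro _ u uS)).
      have := subset_leq_card d1.
      move: po; rewrite /pot card_exA (card_exP bP1) cA1 cP1 => po' h1 h2.
      exact: (arB po' h1 h2 hS2).
    * by rewrite card_exA cA1 addSn ltnS leq_addr.
  + have [d [dD1 dD]] : exists d, d \in Dead A1 P1 /\ d \notin Dead A P.
      case: (set_0Vmem (Sx A1 b)) => [E|[z0 z0S]].
      * exists b; split.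
        -- rewrite /Dead inE in_setD bA1 bP1 /=.
           apply/subsetP=> u; rewrite inE => ebu; apply/negPn/negP => uA1.
           have: u \in Sx A1 b by rewrite /Sx in_setD uA1 inE ebu.
           by rewrite E inE.
        -- by rewrite /Dead !inE (negbTE bA) !andbF.
      * move: (z0S); rewrite /Sx in_setD inE => /andP[z0A1 ebz0].
        have degb : 3 <= #|Nb b|.
          case: (deg b); rewrite /degree => // h1.
          have aN : a \in Nb b by rewrite inE esym.
          have zN : z0 \in Nb b by rewrite inE.
          have := le1_eq (eq_leq h1) aN zN => E.
          by rewrite E aA1 in z0A1.
        have : 1 < #|Nb b :&: A1|.
          have sub: Nb b \subset (Nb b :&: A1) :|: Sx A1 b.
            apply/subsetP=> u uN; rewrite /Sx in_setU in_setI in_setD uN /=.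
            by case: (u \in A1).
          have := subset_leq_card sub; rewrite cardsU => hc; exact: (arD degb hS2 hc).
        case/(exists_other a) => w []; rewrite inE => /andP[wN wA1] wa.
        have ebw : e b w by rewrite inE in wN.
        have wA : w \in A.
          move: wA1; rewrite /A1 /exA inE => /orP[//|wS].
          have E := le1_eq (eq_leq Sa1) bS wS.
          by rewrite E eirr in ebw.
        have wP : w \notin P.
          apply/negP=> wP; move: (subsetP (HP w wP) b).
          rewrite inE esym ebw => /(_ isT).
          by rewrite (negbTE bA).
        have hw := Hle w wA wP.
        have bSw : b \in Sx A w by rewrite /Sx !inE bA esym ebw.
        exists w; split.
        -- rewrite /Dead inE in_setD wA1 /P1 /exP !inE negb_or wa wP /=.
           apply/subsetP=> u; rewrite inE => ewu.
           case uA: (u \in A); first by rewrite /A1 /exA inE uA.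
           have uS: u \in Sx A w by rewrite /Sx !inE uA ewu.
           by rewrite (le1_eq hw bSw uS).
        -- rewrite /Dead !inE wA wP /=.
           apply/negP => /subsetP /(_ b).
           by rewrite inE esym ebw (negbTE bA) => /(_ isT).
    exists A1, P1, (exp A a p), (exh A a h); split => //.
    * by rewrite /P1 /exP !inE rP orbT.
    * have : #|Dead A P| < #|Dead A1 P1|.
        by apply: proper_card; apply/properP; split => //; exists d.
      move: po; rewrite /pot cA1 cP1 => po' h1; exact: (arC po' h1).
    * by rewrite cA1.
Qed.

Lemma arL {a a' n k} : a < a' -> a' <= n -> n - a <= k.+1 -> n - a' <= k.
Proof. lia. Qed.

Lemma loop k (A P : {set T}) p h : #|T| - #|A| <= k -> BI A P p h -> r \in P -> pot A P ->
  exists P' p' h', [/\ BI setT P' p' h', r \in P' & pot setT P'].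
Proof.
elim: k A P p h => [|k IH] A P p h hk bi rP po.
- have EA : A = setT.
    apply/eqP; rewrite eqEcard subsetT cardsT -subn_eq0.
    by rewrite leqn0 in hk.
  by subst; exists P, p, h.
- case: (boolP (A == setT)) => [/eqP EA|neA]; first by subst; exists P, p, h.
  have [A' [P' [p' [h' [bi' rP' po' lt]]]]] := @step A P p h bi rP po neA.
  apply: (IH A' P' p' h') => //.
  exact: (arL lt (max_card _) hk).
Qed.

Lemma arI {k D} : 0 < k -> 3 * 1 + 1 <= 2 * (1 + k) + D.
Proof. lia. Qed.

Lemma init : exists A P p h, [/\ BI A P p h, r \in P & pot A P].
Proof.
have bi0 : BI [set r] set0 (fun _ => r) (fun _ => 0%N).
  split=> //; first by rewrite inE.
  - by rewrite sub0set.
  - by move=> y; rewrite inE => ->.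
  - by move=> x; rewrite inE.
have [b eb] : exists b, e r b.
  have : 0 < #|Nb r|.
    have := deg r; rewrite /degree; case=> [->|H] //; exact: leq_trans H.
  by case/(@nonempty_of _) => b; rewrite inE => ?; exists b.
have rr : r \in [set r] by rewrite inE.
have bS : b \in Sx [set r] r.
  rewrite /Sx !inE eb andbT; apply/eqP=> E; by rewrite E eirr in eb.
exists (exA [set r] r), (exP set0 r), (exp [set r] r (fun _ => r)), (exh [set r] r (fun _ => 0%N)).
split.
- exact: expand_BI.
- by rewrite /exP in_setU1 eqxx.
- rewrite /pot (card_exP (negbT (in_set0 r))) cards0 card_exA cards1.
  have : 0 < #|Sx [set r] r| by rewrite card_gt0; apply/set0Pn; exists b.
  exact: arI.
Qed.

End Tree.

Lemma ex_max (T : eqType) (f : T -> nat) (s : seq T) x0 :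
  exists v, v \in x0 :: s /\ forall z, z \in x0 :: s -> f z <= f v.
Proof.
elim: s x0 => [|y s IH] x0.
- by exists x0; split=> [|z]; rewrite !inE // => /eqP->.
- have [v [vin vm]] := IH y.
  case: (leqP (f x0) (f v)) => hv.
  + exists v; split; first by rewrite inE vin orbT.
    by move=> z; rewrite inE => /orP[/eqP->//|]; exact: vm.
  + exists x0; split; first by rewrite inE eqxx.
    move=> z; rewrite inE => /orP[/eqP->//|/vm hz].
    exact: leq_trans hz (ltnW hv).
Qed.

Section Final.
Variables (T : finType) (e : rel T) (r : T).
Hypothesis esym : symmetric e.
Hypothesis eirr : irreflexive e.

Lemma final (P : {set T}) (p : T -> T) (h : T -> nat) : BI T e r setT P p h -> r \in P -> pot T e setT P ->
  exists t : rel T, spanning_tree e t /\ #|T| < 4 * #|leaves t|.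
Proof.
case=> _ _ pr Hy _ rP po.
have Hy' : forall y, y != r -> [/\ p y \in P, e y (p y) & h (p y) < h y].
  by move=> y; apply: Hy; rewrite inE.
pose t : rel T := fun x y => (x != y) && ((p x == y) || (p y == x)).
have tsym : symmetric t by move=> x y; rewrite /t eq_sym orbC.
have tirr : irreflexive t by move=> x; rewrite /t eqxx.
have par : forall x y, t x y -> p x = y \/ (y != r /\ p y = x /\ h x < h y).
  move=> x y /andP[xy /orP[/eqP E|/eqP E]]; first by left.
  right; case: (eqVneq y r) => [yr|yr].
    by subst y; rewrite pr in E; subst x; rewrite eqxx in xy.
  by have [_ _ hl] := Hy' y yr; rewrite E in hl.
exists t; split.
- split.
  + move=> x y txy; case/par: (txy) => [E|[yr [E _]]].
    * case: (eqVneq x r) => [xr|xr].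
        by subst x; rewrite pr in E; subst y; rewrite tirr in txy.
      by have [_ ex _] := Hy' x xr; rewrite -E.
    * by have [_ ey _] := Hy' y yr; rewrite esym -E.
  + by split.
  + have cr : forall n x, h x <= n -> connect t x r.
      elim=> [|n IH] x hx; case: (eqVneq x r) => [->|xr] //;
        have [_ _ hl] := Hy' x xr.
      * by move: (leq_trans hl hx).
      * have txp : t x (p x) by rewrite /t eqxx /= andbT; apply/eqP=> E; rewrite -E ltnn in hl.
        apply: connect_trans (connect1 txp) (IH _ _).
        by rewrite -ltnS; exact: leq_trans hl hx.
    move=> x y; apply: connect_trans (cr _ x (leqnn _)) _.
    by rewrite (sym_connect_sym tsym); exact: cr.
  + move=> [x [s [hs u pth cl]]].
    have cyc : cycle t (x :: s) by rewrite /= rcons_path pth cl.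
    have [v [vin vmax]] := @ex_max _ h s x.
    case: (rot_to vin) => i s' E.
    have cyc' : cycle t (v :: s') by rewrite -E rot_cycle.
    have u' : uniq (v :: s') by rewrite -E rot_uniq.
    have sz : size s = size s' by move: (congr1 size E); rewrite size_rot /= => [[]].
    have mem' : forall z, z \in v :: s' -> z \in x :: s by move=> z; rewrite -E mem_rot.
    have key : forall y, y \in v :: s' -> t v y -> p v = y.
      move=> y yin /par [//|[_ [_ hl]]].
      by move: (vmax y (mem' y yin)); rewrite leqNgt hl.
    move: sz cyc' u' key; clear E mem' => sz.
    case: s' sz => [|a s''] /= sz; first by rewrite sz in hs.
    rewrite rcons_path => /andP[tva /andP[_ tbv]] /andP[_ /andP[anin _]] key.
    case: s'' sz anin tbv key => [|c s3] sz anin tbv key; first by rewrite sz in hs.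
    have ain : a \in [:: v, a, c & s3] by rewrite !inE eqxx orbT.
    have pa := key a ain tva.
    have bin : last a (c :: s3) \in c :: s3 by rewrite /= mem_last.
    have bin' : last a (c :: s3) \in [:: v, a, c & s3].
      by rewrite inE (in_cons a) bin !orbT.
    have tvb : t v (last a (c :: s3)) by rewrite tsym.
    have pb := key _ bin' tvb.
    by move: anin; rewrite -pa pb bin.
- have hl : ~: P \subset leaves t.
    apply/subsetP=> x; rewrite inE => xP.
    have xr : x != r by apply: contraNneq xP => ->.
    have [_ _ hl] := Hy' x xr.
    rewrite /leaves inE /degree.
    suff -> : [set y | t x y] = [set p x] by rewrite cards1.
    apply/setP=> y; rewrite !inE; apply/idP/idP.
    + move/par => [->//|[yr [E _]]].
      by have [py _ _] := Hy' y yr; rewrite E (negbTE xP) in py.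
    + move/eqP->; rewrite /t eqxx andbT; apply/eqP=> E.
      by rewrite -E ltnn in hl.
  have hD : #|Dead T e setT P| <= #|~: P|.
    by apply: subset_leq_card; apply/subsetP=> x; rewrite !inE => /andP[/andP[]].
  have hC := cardsC P.
  have hL := subset_leq_card hl.
  move: po; rewrite /pot cardsT => po.
  lia.
Qed.

End Final.

Local Open Scope ring_scope.

Theorem mainTheorem13 :
  exists c : rat, 0 < c /\
    forall (T : finType) (e : rel T),
      simple_graph e ->
      connected_graph e ->
      (2 <= #|T|)%N ->
      (forall x : T, degree e x = 1%N \/ (3 <= degree e x)%N) ->
      exists t : rel T, spanning_tree e t /\
        c * (#|T|)%:R <= (#|leaves t|)%:R.
Proof.
exists (1/4); split; first by [].
move=> T e [esym eirr] conn hT deg.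
have [r _] : exists r : T, true.
  case: (set_0Vmem [set: T]) => [E|[r _]]; last by exists r.
  by move: hT; rewrite -cardsT E cards0.
have [A [P [p [h [bi rP po]]]]] := @init T e r esym eirr deg.
have [P' [p' [h' [bi' rP' po']]]] :=
  @loop T e r esym eirr conn deg _ A P p h (leqnn _) bi rP po.
have [t [st lt]] := @final T e r esym P' p' h' bi' rP' po'.
exists t; split => //.
have : ((#|T|)%:R : rat) <= 4 * (#|leaves t|)%:R.
  by rewrite -natrM ler_nat; exact: ltnW.
lra.
Qed.
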